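(* Let $k\ge2$, $-\frac{\pi}{2}\le\theta_1<\dots<\theta_k\le\frac{\pi}{2}$, $\hat\theta_1,\dots,\hat\theta_k\in[-\frac{\pi}{2},\frac{\pi}{2}]$, and $\epsilon>0$. If $$\|\eta_{k,k}(e^{i\theta_1},\dots,e^{i\theta_k},e^{i\hat\theta_1},\dots,e^{i\hat\theta_k})\|_\infty<\Big(\frac{2}{\pi}\Big)^k\epsilon\quad\text{and}\quad\theta_{\min}=\min_{q\ne j}|\theta_q-\theta_j|\ge\Big(\frac{4\epsilon}{\lambda(k)}\Big)^{1/k},$$ then after reordering the $\hat\theta_j$, for all $j=1,\dots,k$, $$|\hat\theta_j-\theta_j|<\frac{\theta_{\min}}{2}\quad\text{and}\quad|\hat\theta_j-\theta_j|\le\frac{2^{k-1}\epsilon}{(k-2)!\,\theta_{\min}^{k-1}}.$$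
   Context: For $z_1,\dots,z_p,\hat z_1,\dots,\hat z_q\in\mathbb C$, $\eta_{p,q}(z_1,\dots,z_p,\hat z_1,\dots,\hat z_q)\in\mathbb R^p$ is the vector whose $j$-th entry is $\prod_{l=1}^q|z_j-\hat z_l|$. For an integer $k\ge1$: $\xi(1)=\frac12$; $\xi(k)=\frac{(\frac{k-1}{2})!(\frac{k-3}{2})!}{4}$ if $k\ge3$ is odd; $\xi(k)=\frac{((\frac{k-2}{2})!)^2}{4}$ if $k$ is even. For $k\ge2$: $\lambda(2)=1$ and $\lambda(k)=\xi(k-2)$ for $k\ge3$. *)

(* Defs.v *)
From Stdlib Require Import Reals Lra Lia Arith List.
Open Scope R_scope.

(* Modulus of a complex number a + i b. *)
Definition cmod (a b : R) : R := sqrt (a ^ 2 + b ^ 2).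

(* |e^{i t} - e^{i s}| *)
Definition unit_dist (t s : R) : R := cmod (cos t - cos s) (sin t - sin s).

(* Product over l = 0..q-1 of |z_j - zh_l|, where z and zh are given by their
   real and imaginary parts (indices start at 0). *)
Fixpoint prod_dist (zre zim : R) (zhre zhim : nat -> R) (q : nat) : R :=
  match q with
  | O => 1
  | S q' => prod_dist zre zim zhre zhim q' * cmod (zre - zhre q') (zim - zhim q')
  end.

(* j-th entry (0-based) of eta_{p,q}(z_1..z_p, zh_1..zh_q). *)
Definition eta_entry (q : nat) (zre zim zhre zhim : nat -> R) (j : nat) : R :=
  prod_dist (zre j) (zim j) zhre zhim q.

Fixpoint norm_inf (p : nat) (v : nat -> R) : R :=
  match p with
  | O => 0
  | S p' => Rmax (norm_inf p' v) (Rabs (v p'))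
  end.

(* ||eta_{p,q}(e^{i th_1},...,e^{i th_p}, e^{i thh_1},...,e^{i thh_q})||_inf *)
Definition eta_unit_norm (p q : nat) (th thh : nat -> R) : R :=
  norm_inf p (eta_entry q (fun j => cos (th j)) (fun j => sin (th j))
                          (fun l => cos (thh l)) (fun l => sin (thh l))).

(* xi(k) as in the paper (k >= 1; value at 0 irrelevant). *)
Definition xi (k : nat) : R :=
  match k with
  | O => 0
  | 1%nat => / 2
  | _ => if Nat.odd k
         then INR (fact ((k - 1) / 2)) * INR (fact ((k - 3) / 2)) / 4
         else (INR (fact ((k - 2) / 2))) ^ 2 / 4
  end.

Definition lambda (k : nat) : R :=
  match k with
  | 2%nat => 1
  | _ => xi (k - 2)
  end.

Definition is_theta_min (k : nat) (th : nat -> R) (m : R) : Prop :=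
  (forall q j, (q < k)%nat -> (j < k)%nat -> q <> j -> m <= Rabs (th q - th j)) /\
  (exists q j, (q < k)%nat /\ (j < k)%nat /\ q <> j /\ m = Rabs (th q - th j)).

(* Main.v *)
Require Import Defs.
From Stdlib Require Import Reals Arith Lra Lia List Permutation ClassicalEpsilon.
Open Scope R_scope.

Fixpoint rprod (n:nat) (f:nat->R) : R := match n with O => 1 | S n => rprod n f * f n end.
Fixpoint rsum (n:nat) (f:nat->R) : R := match n with O => 0 | S n => rsum n f + f n end.

Lemma rprod_ext n f g : (forall i, (i < n)%nat -> f i = g i) -> rprod n f = rprod n g.
Proof. induction n; simpl; intros H; auto. rewrite IHn by (intros; apply H; lia). rewrite H by lia; auto. Qed.
Lemma rsum_ext n f g : (forall i, (i < n)%nat -> f i = g i) -> rsum n f = rsum n g.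
Proof. induction n; simpl; intros H; auto. rewrite IHn by (intros; apply H; lia). rewrite H by lia; auto. Qed.
Lemma rprod_shift n f : rprod (S n) f = f 0%nat * rprod n (fun t => f (S t)).
Proof. induction n; simpl in *. ring. rewrite IHn. ring. Qed.
Lemma rsum_shift n f : rsum (S n) f = f 0%nat + rsum n (fun t => f (S t)).
Proof. induction n; simpl in *. ring. rewrite IHn. ring. Qed.
Lemma rprod_mult n f g : rprod n (fun i => f i * g i) = rprod n f * rprod n g.
Proof. induction n; simpl. ring. rewrite IHn. ring. Qed.
Lemma rprod_scal n c f : rprod n (fun i => c * f i) = c ^ n * rprod n f.
Proof. induction n; simpl. ring. rewrite IHn. ring. Qed.
Lemma rprod_abs n f : Rabs (rprod n f) = rprod n (fun i => Rabs (f i)).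
Proof. induction n; simpl. apply Rabs_R1. rewrite Rabs_mult, IHn. auto. Qed.
Lemma rsum_add n f g : rsum n (fun i => f i + g i) = rsum n f + rsum n g.
Proof. induction n; simpl. ring. rewrite IHn. ring. Qed.
Lemma rsum_scal n c f : rsum n (fun i => c * f i) = c * rsum n f.
Proof. induction n; simpl. ring. rewrite IHn. ring. Qed.
Lemma rsum_abs n f : Rabs (rsum n f) <= rsum n (fun i => Rabs (f i)).
Proof. induction n; simpl. rewrite Rabs_R0; lra. eapply Rle_trans. apply Rabs_triang. lra. Qed.
Lemma rsum_le n f g : (forall i, (i < n)%nat -> f i <= g i) -> rsum n f <= rsum n g.
Proof. induction n; simpl; intros H. lra. assert (f n <= g n) by (apply H; lia).
 assert (rsum n f <= rsum n g) by (apply IHn; intros; apply H; lia). lra. Qed.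
Lemma rsum_lt n f g : (0 < n)%nat -> (forall i, (i < n)%nat -> f i < g i) -> rsum n f < rsum n g.
Proof. intros Hn H. destruct n. lia. simpl. assert (f n < g n) by (apply H; lia).
 assert (rsum n f <= rsum n g) by (apply rsum_le; intros; left; apply H; lia). lra. Qed.
Lemma rprod_nonneg n f : (forall i, (i < n)%nat -> 0 <= f i) -> 0 <= rprod n f.
Proof. induction n; simpl; intros H. lra. apply Rmult_le_pos. apply IHn; intros; apply H; lia. apply H; lia. Qed.
Lemma rprod_pos n f : (forall i, (i < n)%nat -> 0 < f i) -> 0 < rprod n f.
Proof. induction n; simpl; intros H. lra. apply Rmult_lt_0_compat. apply IHn; intros; apply H; lia. apply H; lia. Qed.
Lemma rprod_nz n f : (forall i, (i < n)%nat -> f i <> 0) -> rprod n f <> 0.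
Proof. induction n; simpl; intros H. lra. apply Rmult_integral_contrapositive_currified. apply IHn; intros; apply H; lia. apply H; lia. Qed.
Lemma rprod_le n f g : (forall i, (i < n)%nat -> 0 <= f i <= g i) -> rprod n f <= rprod n g.
Proof. induction n; simpl; intros H. lra. apply Rmult_le_compat.
 apply rprod_nonneg; intros; apply H; lia. apply H; lia. apply IHn; intros; apply H; lia. apply H; lia. Qed.
Lemma rprod_neg1 n f j : (j < n)%nat -> f j < 0 -> (forall i, (i < n)%nat -> i <> j -> 0 < f i) -> rprod n f < 0.
Proof. induction n; simpl; intros Hj Hf H. lia. destruct (Nat.eq_dec j n).
 - subst. assert (0 < rprod n f) by (apply rprod_pos; intros; apply H; lia). nra.
 - assert (rprod n f < 0) by (apply IHn; auto; try lia; intros; apply H; lia). assert (0 < f n) by (apply H; lia). nra. Qed.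
Lemma rprod_neg_ex n f : rprod n f < 0 -> exists i, (i < n)%nat /\ f i < 0.
Proof. intros H. destruct (Classical_Prop.classic (exists i, (i < n)%nat /\ f i < 0)) as [E|E]; auto.
 exfalso. assert (0 <= rprod n f). apply rprod_nonneg. intros i Hi. destruct (Rle_lt_dec 0 (f i)); auto. exfalso; apply E; eauto. lra. Qed.

Lemma rprod_split_gen j n h : rprod (j + 1 + n) (fun i => if Nat.eqb i j then 1 else h i) = rprod j h * rprod n (fun t => h (j + 1 + t)%nat).
Proof. induction n.
 - rewrite Nat.add_0_r. replace (j+1)%nat with (S j) by lia. simpl. rewrite Nat.eqb_refl.
   rewrite (rprod_ext j _ h). ring. intros i Hi. destruct (Nat.eqb_spec i j); auto. lia.
 - replace (j + 1 + S n)%nat with (S (j + 1 + n)) by lia. simpl. rewrite IHn.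
   destruct (Nat.eqb_spec (j+1+n) j). lia. ring. Qed.
Lemma rprod_split j k h : (j < k)%nat -> rprod k (fun i => if Nat.eqb i j then 1 else h i) = rprod j h * rprod (k - 1 - j) (fun t => h (j + 1 + t)%nat).
Proof. intros. rewrite <- rprod_split_gen. f_equal. lia. Qed.
Lemma rprod_pick j k f : (j < k)%nat -> rprod k f = f j * rprod k (fun i => if Nat.eqb i j then 1 else f i).
Proof. intros Hj. rewrite rprod_split by auto. replace k with (j + 1 + (k-1-j))%nat at 1 by lia.
 clear Hj. generalize (k-1-j)%nat as n. induction n.
 - rewrite Nat.add_0_r. replace (j+1)%nat with (S j) by lia. simpl. ring.
 - replace (j + 1 + S n)%nat with (S (j + 1 + n)) by lia. simpl. rewrite IHn. ring. Qed.
Lemma rprod_rev g i n : (n <= i)%nat -> rprod n (fun m => g (i - m)%nat) * rprod (i - n) (fun t => g (S t)) = rprod i (fun t => g (S t)).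
Proof. induction n; intros H. simpl. rewrite Nat.sub_0_r. ring.
 simpl. rewrite <- IHn by lia. replace (i - n)%nat with (S (i - S n)) by lia. simpl.
 replace (S (i - S n)) with (i - n)%nat by lia. ring. Qed.

Definition den (x:nat->R) (n i:nat) := rprod (S n) (fun m => if Nat.eqb m i then 1 else x i - x m).
Definition DD (f:R->R) (x:nat->R) (n:nat) := rsum (S n) (fun i => f (x i) / den x n i).
Definition distinct (x:nat->R) n := forall i j, (i <= n)%nat -> (j <= n)%nat -> i <> j -> x i <> x j.

Lemma den_nz x n i : distinct x n -> (i <= n)%nat -> den x n i <> 0.
Proof. intros D Hi. unfold den. apply rprod_nz. intros m Hm. destruct (Nat.eqb_spec m i). lra.
 apply Rminus_eq_contra. apply D; lia. Qed.

Lemma DD_ext f g x n : (forall y, f y = g y) -> DD f x n = DD g x n.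
Proof. intros H. unfold DD. apply rsum_ext. intros. rewrite H. auto. Qed.
Lemma DD_add f g x n : DD (fun y => f y + g y) x n = DD f x n + DD g x n.
Proof. unfold DD. rewrite <- rsum_add. apply rsum_ext. intros. unfold Rdiv. ring. Qed.
Lemma DD_scal c f x n : DD (fun y => c * f y) x n = c * DD f x n.
Proof. unfold DD. rewrite <- rsum_scal. apply rsum_ext. intros. unfold Rdiv. ring. Qed.

Lemma DD_last h x n : distinct x (S n) -> DD (fun y => (y - x (S n)) * h y) x (S n) = DD h x n.
Proof. intros D. unfold DD. remember (S n) as N. simpl. subst N.
 replace (x (S n) - x (S n)) with 0 by ring. rewrite Rmult_0_l. unfold Rdiv at 2. rewrite Rmult_0_l, Rplus_0_r.
 apply rsum_ext. intros i Hi. unfold den. remember (S n) as N. simpl. subst N.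
 destruct (Nat.eqb_spec (S n) i). lia.
 assert (x i - x (S n) <> 0) by (apply Rminus_eq_contra; apply D; lia).
 assert (rprod (S n) (fun m => if Nat.eqb m i then 1 else x i - x m) <> 0).
 { apply rprod_nz. intros m Hm. destruct (Nat.eqb_spec m i). lra. apply Rminus_eq_contra; apply D; lia. }
 set (P := rprod (S n) _) in *. field. auto. Qed.

Lemma DD_first h x n : distinct x (S n) -> DD (fun y => (y - x 0%nat) * h y) x (S n) = DD h (fun i => x (S i)) n.
Proof. intros D. unfold DD. rewrite rsum_shift. replace (x 0%nat - x 0%nat) with 0 by ring.
 rewrite Rmult_0_l. unfold Rdiv at 1. rewrite Rmult_0_l, Rplus_0_l.
 apply rsum_ext. intros i Hi. unfold den. rewrite rprod_shift. simpl Nat.eqb.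
 assert (x (S i) - x 0%nat <> 0) by (apply Rminus_eq_contra; apply D; lia).
 assert (rprod (S n) (fun m => if Nat.eqb m i then 1 else x (S i) - x (S m)) <> 0).
 { apply rprod_nz. intros m Hm. destruct (Nat.eqb_spec m i). lra. apply Rminus_eq_contra; apply D; lia. }
 set (P := rprod (S n) _) in *. cbv iota. field. auto. Qed.

Lemma distinct_le x n m : (m <= n)%nat -> distinct x n -> distinct x m.
Proof. intros H D i j Hi Hj. apply D; lia. Qed.
Lemma distinct_shift x n : distinct x (S n) -> distinct (fun i => x (S i)) n.
Proof. intros D i j Hi Hj Hij. apply D; lia. Qed.

Lemma DD_one0 x : DD (fun _ => 1) x 0 = 1.
Proof. unfold DD, den. simpl. field. Qed.

Lemma DD_one n : forall x, distinct x (S n) -> DD (fun _ => 1) x (S n) = 0.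
Proof. induction n; intros x D;
 match goal with |- DD _ _ (S ?n) = 0 => 
 assert (Hc : x (S n) - x 0%nat <> 0) by (apply Rminus_eq_contra; apply D; lia);
 apply (Rmult_eq_reg_l (x (S n) - x 0%nat)); auto; rewrite Rmult_0_r;
 rewrite <- DD_scal;
 rewrite (DD_ext _ (fun y => (y - x 0%nat) * 1 + (-1) * ((y - x (S n)) * 1))) by (intros; ring);
 rewrite DD_add, DD_scal, DD_first, DD_last; auto end.
 - rewrite !DD_one0. ring.
 - rewrite IHn, IHn. ring. apply (distinct_le x (S (S n))); auto. apply distinct_shift; auto. Qed.

Definition pp (r:nat) (b:nat->R) (y:R) := rprod r (fun l => y - b l).

Lemma DD_pp b r : forall n x, (r <= n)%nat -> distinct x n -> DD (pp r b) x n = if Nat.eqb r n then 1 else 0.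
Proof. induction r; intros n x Hr D.
 - unfold pp; simpl. destruct n. apply DD_one0. apply DD_one; auto.
 - destruct n. lia. unfold pp; simpl.
   rewrite (DD_ext _ (fun y => (y - x (S n)) * pp r b y + (x (S n) - b r) * pp r b y)) by (intros; unfold pp; ring).
   rewrite DD_add, DD_scal, DD_last by auto. rewrite !IHr; try lia; auto.
   destruct (Nat.eqb_spec r (S n)). lia. ring. apply (distinct_le x (S n)); auto. Qed.

Definition Dn (a:nat->R) k i := rprod k (fun m => if Nat.eqb m i then 1 else a i - a m).

Lemma key_identity (a b : nat -> R) (k : nat) (xs : R) :
  (forall i j, (i < k)%nat -> (j < k)%nat -> i <> j -> a i <> a j) ->
  (forall i, (i < k)%nat -> xs <> a i) ->
  pp k b xs / rprod k (fun m => xs - a m) = 1 - rsum k (fun i => pp k b (a i) / (Dn a k i * (a i - xs))).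
Proof. intros Ha Hx.
 set (x := fun m => if Nat.eqb m k then xs else a m).
 assert (D : distinct x k).
 { intros i j Hi Hj Hij. unfold x. destruct (Nat.eqb_spec i k), (Nat.eqb_spec j k); subst.
   lia. apply Hx; lia. intro; apply (Hx i); [lia|auto]. apply Ha; lia. }
 pose proof (DD_pp b k k x (le_n k) D) as E. rewrite Nat.eqb_refl in E.
 unfold DD in E. simpl rsum in E.
 assert (EQ : rsum k (fun i => pp k b (x i) / den x k i) = rsum k (fun i => pp k b (a i) / (Dn a k i * (a i - xs)))).
 { apply rsum_ext. intros i Hi. unfold x, den, Dn. simpl rprod. destruct (Nat.eqb_spec i k). lia.
   rewrite Nat.eqb_refl. destruct (Nat.eqb_spec k i). lia. f_equal. f_equal.
   apply rprod_ext. intros m Hm. destruct (Nat.eqb_spec m i); auto. destruct (Nat.eqb_spec m k); auto. lia. }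
 rewrite EQ in E.
 assert (EQ2 : den x k k = rprod k (fun m => xs - a m)).
 { unfold den. simpl rprod. rewrite Nat.eqb_refl. rewrite Rmult_1_r. apply rprod_ext.
   intros m Hm. unfold x. rewrite Nat.eqb_refl. destruct (Nat.eqb_spec m k). lia. auto. }
 rewrite EQ2 in E. unfold x at 1 in E. rewrite Nat.eqb_refl in E. lra. Qed.

Lemma rprod_fact n : rprod n (fun t => INR (S t)) = INR (fact n).
Proof. induction n; cbn [rprod]. simpl; lra. rewrite IHn. rewrite fact_simpl, mult_INR. ring. Qed.

Lemma rprod_absdist j k : (j < k)%nat ->
  rprod k (fun m => if Nat.eqb m j then 1 else Rabs (INR j - INR m)) = INR (fact j) * INR (fact (k - 1 - j)).
Proof. intros H. rewrite rprod_split by auto. f_equal.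
 - rewrite (rprod_ext j _ (fun m => INR (j - m))).
   + pose proof (rprod_rev INR j j (le_n j)) as E. rewrite Nat.sub_diag in E. simpl rprod at 2 in E.
     rewrite Rmult_1_r in E. rewrite E. apply rprod_fact.
   + intros m Hm. rewrite minus_INR by lia. rewrite Rabs_right. auto. apply Rle_ge. pose proof (le_INR m j ltac:(lia)). lra.
 - rewrite <- rprod_fact. apply rprod_ext. intros t Ht. rewrite Rabs_left1.
   rewrite !plus_INR. change (INR 1) with 1. rewrite S_INR. ring. rewrite !plus_INR. change (INR 1) with 1. pose proof (pos_INR t). lra. Qed.

Definition Odd n := rprod n (fun t => 2 * INR t + 1).

Lemma rprod_odddist j k : (j < k)%nat ->
  rprod k (fun m => if Nat.eqb m j then 1 else 2 * Rabs (INR j - INR m) - 1) = Odd j * Odd (k - 1 - j).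
Proof. intros H. rewrite rprod_split by auto. unfold Odd. f_equal.
 - rewrite (rprod_ext j _ (fun m => (fun s => 2 * INR s - 1) (j - m)%nat)).
   + pose proof (rprod_rev (fun s => 2 * INR s - 1) j j (le_n j)) as E. rewrite Nat.sub_diag in E. simpl rprod at 2 in E.
     rewrite Rmult_1_r in E. rewrite E. apply rprod_ext. intros. rewrite S_INR. ring.
   + intros m Hm. rewrite minus_INR by lia. rewrite Rabs_right. auto. apply Rle_ge. pose proof (le_INR m j ltac:(lia)). lra.
 - apply rprod_ext. intros t Ht. rewrite Rabs_left1.
   rewrite !plus_INR. change (INR 1) with 1. ring. rewrite !plus_INR. change (INR 1) with 1. pose proof (pos_INR t). lra. Qed.

Lemma Odd_pos n : 0 < Odd n.
Proof. unfold Odd. apply rprod_pos. intros. pose proof (pos_INR i). lra. Qed.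

Lemma Odd_bound s : forall a b, (a + b)%nat = S s -> INR (fact s) <= Odd a * Odd b.
Proof. induction s; intros a b H.
 - simpl. destruct a as [|[|a]]; destruct b as [|[|b]]; try lia; unfold Odd; simpl; lra.
 - assert (Hgen : forall a b, (a + b)%nat = S (S s) -> (b <= a)%nat -> INR (fact (S s)) <= Odd a * Odd b).
   { clear a b H. intros a b H Hba. destruct a as [|a]. lia.
     assert (INR (fact s) <= Odd a * Odd b) by (apply IHs; lia).
     unfold Odd at 1. simpl rprod. fold (Odd a).
     rewrite fact_simpl, mult_INR. pose proof (Odd_pos a). pose proof (Odd_pos b).
     assert (INR (S s) <= 2 * INR a + 1). { replace (2 * INR a + 1) with (INR (2*a+1)) by (rewrite plus_INR, mult_INR; simpl; ring). apply le_INR; lia. }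
     pose proof (pos_INR (fact s)). 
     apply Rle_trans with (INR (S s) * (Odd a * Odd b)). apply Rmult_le_compat_l. apply pos_INR. auto.
     replace (Odd a * (2 * INR a + 1) * Odd b) with ((2 * INR a + 1) * (Odd a * Odd b)) by ring.
     apply Rmult_le_compat_r. left; apply Rmult_lt_0_compat; auto. auto. }
   destruct (le_lt_dec b a). apply Hgen; auto. rewrite Rmult_comm. apply Hgen; lia. Qed.

Lemma sum_R0_rsum f n : sum_f_R0 f n = rsum (S n) f.
Proof. induction n; simpl. ring. rewrite IHn. simpl. auto. Qed.

Lemma binom_sum n : rsum (S n) (fun i => / (INR (fact i) * INR (fact (n - i)))) = 2 ^ n / INR (fact n).
Proof. pose proof (binomial 1 1 n) as E. rewrite sum_R0_rsum in E.
 replace (1 + 1) with 2 in E by ring. rewrite E. unfold Rdiv. rewrite Rmult_comm.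
 rewrite <- rsum_scal. apply rsum_ext. intros i Hi. rewrite !pow1. unfold C.
 pose proof (INR_fact_neq_0 n). pose proof (INR_fact_neq_0 i). pose proof (INR_fact_neq_0 (n - i)). field. auto. Qed.

Lemma natA r : (fact r * fact r * 4 ^ r <= fact (2 * r + 1))%nat.
Proof. induction r. simpl; lia.
 replace (2 * S r + 1)%nat with (S (S (2 * r + 1))) by lia. rewrite !fact_simpl. 
 rewrite Nat.pow_succ_r'. nia. Qed.

Lemma fact_mono a b : (a <= b)%nat -> (fact a <= fact b)%nat.
Proof. induction 1. lia. rewrite fact_simpl. lia. Qed.

Lemma xi_eq m : (2 <= m)%nat -> xi m = if Nat.odd m
         then INR (fact ((m - 1) / 2)) * INR (fact ((m - 3) / 2)) / 4
         else (INR (fact ((m - 2) / 2))) ^ 2 / 4.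
Proof. intros H. destruct m as [|[|m]]; [lia|lia|reflexivity]. Qed.

Lemma lambda_bound k : (2 <= k)%nat -> 0 < lambda k /\ lambda k * 2 ^ (k - 2) <= INR (fact (k - 1)).
Proof. intros Hk. destruct k as [|[|[|[|k]]]]; try lia.
 - unfold lambda; simpl; lra.
 - unfold lambda, xi; simpl; lra.
 - unfold lambda. replace (S (S (S (S k))) - 2)%nat with (S (S k)) by lia.
   rewrite xi_eq by lia. set (m := S (S k)).
   destruct (Nat.Even_or_Odd m) as [[r Hr]|[r Hr]].
   + assert (Nat.odd m = false). { rewrite <- Nat.negb_even. rewrite Hr. rewrite Nat.even_mul. reflexivity. }
     rewrite H. replace ((m - 2) / 2)%nat with (r - 1)%nat.
     2:{ rewrite Hr. replace (2 * r - 2)%nat with ((r - 1) * 2)%nat by lia. rewrite Nat.div_mul; lia. }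
     pose proof (natA (r - 1)). pose proof (fact_mono (2 * (r - 1) + 1) (S (S (S (S k))) - 1)).
     assert (2 * (r - 1) + 1 <= S (S (S (S k))) - 1)%nat by lia.
     split. apply Rmult_lt_0_compat. apply pow_lt. apply lt_0_INR, lt_O_fact. lra.
     replace (S (S (S (S k))) - 2)%nat with (2 * (r - 1) + 2)%nat by lia.
     assert (E4 : 2 ^ m = 4 * 4 ^ (r - 1)).
     { rewrite Hr. replace (2 * r)%nat with (2 * (r - 1) + 2)%nat by (unfold m in Hr; lia).
       rewrite pow_add, pow_mult. replace (2 ^ 2) with 4 by ring. ring. }
     rewrite E4. replace (S (S m) - 1)%nat with (S (S (S (S k))) - 1)%nat by (unfold m; lia).
     apply Rle_trans with (INR (fact (r - 1) * fact (r - 1) * 4 ^ (r - 1))).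
     * rewrite !mult_INR, pow_INR. replace (INR 4) with 4 by (simpl; ring). right. field.
     * apply le_INR. lia.
   + assert (Nat.odd m = true). { apply Nat.odd_spec. exists r. auto. }
     rewrite H. replace ((m - 1) / 2)%nat with r. replace ((m - 3) / 2)%nat with (r - 1)%nat.
     2:{ rewrite Hr. replace (2 * r + 1 - 3)%nat with ((r - 1) * 2)%nat by (unfold m in Hr; lia). rewrite Nat.div_mul; lia. }
     2:{ rewrite Hr. replace (2 * r + 1 - 1)%nat with (r * 2)%nat by lia. rewrite Nat.div_mul; lia. }
     assert (1 <= r)%nat by (unfold m in Hr; lia).
     pose proof (natA r). pose proof (fact_mono (2 * r + 1) (S (S (S (S k))) - 1)).
     assert (2 * r + 1 <= S (S (S (S k))) - 1)%nat by (unfold m in Hr; lia).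
     pose proof (fact_mono (r - 1) r).
     split. apply Rmult_lt_0_compat. apply Rmult_lt_0_compat; apply lt_0_INR, lt_O_fact. lra.
     replace (S (S (S (S k))) - 2)%nat with (2 * (r - 1) + 1 + 2)%nat by (unfold m in Hr; lia).
     assert (E4 : 2 ^ m = 2 * 4 ^ r).
     { rewrite Hr. rewrite pow_add, pow_mult. replace (2 ^ 2) with 4 by ring. ring. }
     rewrite E4. replace (S (S m) - 1)%nat with (S (S (S (S k))) - 1)%nat by (unfold m; lia).
     apply Rle_trans with (INR (fact r * fact r * 4 ^ r)).
     * rewrite !mult_INR, pow_INR. replace (INR 4) with 4 by (simpl; ring).
       assert (E44 : 4 ^ r = 4 * 4 ^ (r - 1)) by (destruct r; [lia| simpl; rewrite Nat.sub_0_r; ring]).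
       rewrite E44.
       assert (INR (fact (r - 1)) <= INR (fact r)) by (apply le_INR; lia).
       pose proof (pow_le 4 (r-1)). pose proof (pos_INR (fact r)).
       assert (0 <= 4 ^ (r - 1)) by (apply pow_le; lra).
       replace (INR (fact r) * INR (fact (r - 1)) / 4 * (2 * (4 * 4 ^ (r - 1))))
         with (2 * (INR (fact r) * INR (fact (r - 1)) * 4 ^ (r - 1))) by (simpl; field).
       replace (INR (fact r) * INR (fact r) * (4 * 4 ^ (r - 1))) with (4 * (INR (fact r) * INR (fact r) * 4 ^ (r - 1))) by ring.
       assert (INR (fact r) * INR (fact (r - 1)) * 4 ^ (r - 1) <= INR (fact r) * INR (fact r) * 4 ^ (r - 1)).
       { apply Rmult_le_compat_r; auto. apply Rmult_le_compat_l; auto. }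
       assert (0 <= INR (fact r) * INR (fact (r - 1)) * 4 ^ (r - 1)).
       { apply Rmult_le_pos; auto. apply Rmult_le_pos; apply pos_INR. }
       lra.
     * apply le_INR. lia. Qed.

Lemma jordan u : 0 <= u <= PI / 2 -> 2 / PI * u <= sin u.
Proof. intros [H0 H1]. pose proof PI_RGT_0 as HPI.
 destruct (Rle_lt_dec (2 / PI * u) (sin u)) as [|Hlt]; auto. exfalso.
 set (g := fun t => sin t - 2 / PI * t).
 assert (Hd : forall c, derivable_pt_lim g c (cos c - 2 / PI)).
 { intro c. unfold g.
   assert (L : derivable_pt_lim (fun t => 2/PI*t) c (2/PI*1)) by (apply (derivable_pt_lim_scal id); apply derivable_pt_lim_id).
   rewrite Rmult_1_r in L.
   apply (derivable_pt_lim_minus sin (fun t => 2 / PI * t)). apply derivable_pt_lim_sin. exact L. }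
 assert (Hu0 : 0 < u). { destruct H0 as [H0|H0]; auto. subst. rewrite sin_0 in Hlt. lra. }
 assert (Hu1 : u < PI / 2). { destruct H1 as [H1|H1]; auto. subst. rewrite sin_PI2 in Hlt. field_simplify in Hlt. lra. lra. }
 destruct (MVT_cor2 g (fun c => cos c - 2 / PI) 0 u Hu0 (fun c _ => Hd c)) as [c1 [E1 [Hc1 Hc1']]].
 destruct (MVT_cor2 g (fun c => cos c - 2 / PI) u (PI/2) Hu1 (fun c _ => Hd c)) as [c2 [E2 [Hc2 Hc2']]].
 unfold g in E1, E2. rewrite sin_0 in E1. rewrite sin_PI2 in E2.
 assert (cos c2 < cos c1) by (apply cos_decreasing_1; lra).
 assert (A1 : (cos c1 - 2 / PI) * u < 0) by lra.
 assert (A2 : 0 < (cos c2 - 2 / PI) * (PI / 2 - u)).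
 { rewrite <- E2. replace (2 / PI * (PI / 2)) with 1 by (field; lra). lra. }
 assert (cos c1 - 2 / PI < 0). { destruct (Rle_lt_dec 0 (cos c1 - 2/PI)); auto. nra. }
 assert (0 < cos c2 - 2 / PI). { destruct (Rle_lt_dec (cos c2 - 2/PI) 0); auto. nra. }
 lra. Qed.

Lemma jordan_abs u : -(PI/2) <= u <= PI / 2 -> 2 / PI * Rabs u <= Rabs (sin u).
Proof. intros H. destruct (Rle_lt_dec 0 u).
 - rewrite (Rabs_right u) by lra. rewrite Rabs_right. apply jordan; lra.
   apply Rle_ge. apply Rle_trans with (2 / PI * u). apply Rmult_le_pos; auto. left; apply Rdiv_lt_0_compat; [lra|apply PI_RGT_0].
   apply jordan; lra.
 - rewrite (Rabs_left u) by lra. rewrite <- (Ropp_involutive u) at 2. rewrite sin_neg, Rabs_Ropp.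
   assert (2 / PI * - u <= sin (- u)) by (apply jordan; lra).
   rewrite Rabs_right. auto. apply Rle_ge. eapply Rle_trans; [|apply H0].
   apply Rmult_le_pos; [left; apply Rdiv_lt_0_compat; [lra|apply PI_RGT_0]|lra]. Qed.

Lemma cmod_unit a b : cmod (cos a - cos b) (sin a - sin b) = 2 * Rabs (sin ((a - b) / 2)).
Proof. unfold cmod. 
 assert (E : (cos a - cos b) ^ 2 + (sin a - sin b) ^ 2 = Rsqr (2 * sin ((a - b) / 2))).
 { pose proof (cos_2a_sin ((a - b) / 2)) as C. replace (2 * ((a - b) / 2)) with (a - b) in C by field.
   rewrite cos_minus in C. pose proof (sin2_cos2 a). pose proof (sin2_cos2 b). unfold Rsqr in *. nra. }
 rewrite E, sqrt_Rsqr_abs, Rabs_mult, Rabs_right by lra. auto. Qed.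

Lemma chord_ge a b : -(PI/2) <= a <= PI/2 -> -(PI/2) <= b <= PI/2 ->
  2 / PI * Rabs (a - b) <= cmod (cos a - cos b) (sin a - sin b).
Proof. intros Ha Hb. rewrite cmod_unit.
 assert (2 / PI * Rabs ((a - b) / 2) <= Rabs (sin ((a - b) / 2))) by (apply jordan_abs; lra).
 replace (Rabs ((a - b) / 2)) with (Rabs (a - b) / 2) in H.
 lra. unfold Rdiv. rewrite Rabs_mult. rewrite (Rabs_right (/2)) by lra. auto. Qed.

Lemma prod_dist_rprod t thh q : prod_dist (cos t) (sin t) (fun l => cos (thh l)) (fun l => sin (thh l)) q
  = rprod q (fun l => cmod (cos t - cos (thh l)) (sin t - sin (thh l))).
Proof. induction q; simpl; auto. rewrite IHq. auto. Qed.

Lemma norm_inf_ge p v j : (j < p)%nat -> Rabs (v j) <= norm_inf p v.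
Proof. induction p; intros H. lia. simpl. destruct (Nat.eq_dec j p). subst. apply Rmax_r.
 eapply Rle_trans. apply IHp; lia. apply Rmax_l. Qed.

Lemma P_bound k th thh eps j :
  (forall j, (j < k)%nat -> - (PI / 2) <= th j <= PI / 2) ->
  (forall j, (j < k)%nat -> - (PI / 2) <= thh j <= PI / 2) ->
  eta_unit_norm k k th thh < (2 / PI) ^ k * eps -> (j < k)%nat ->
  rprod k (fun l => Rabs (th j - thh l)) < eps.
Proof. intros Hth Hthh Heta Hj. pose proof PI_RGT_0.
 assert (E1 : Rabs (eta_entry k (fun j => cos (th j)) (fun j => sin (th j)) (fun l => cos (thh l)) (fun l => sin (thh l)) j) <= eta_unit_norm k k th thh) by (apply norm_inf_ge; auto).
 unfold eta_entry in E1. rewrite prod_dist_rprod in E1.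
 assert (E2 : rprod k (fun l => 2 / PI * Rabs (th j - thh l)) <= rprod k (fun l => cmod (cos (th j) - cos (thh l)) (sin (th j) - sin (thh l)))).
 { apply rprod_le. intros i Hi. split. apply Rmult_le_pos. left; apply Rdiv_lt_0_compat; lra. apply Rabs_pos.
   apply chord_ge; auto. }
 rewrite rprod_scal in E2.
 assert (0 < (2 / PI) ^ k) by (apply pow_lt; apply Rdiv_lt_0_compat; lra).
 pose proof (Rle_abs (rprod k (fun l => cmod (cos (th j) - cos (thh l)) (sin (th j) - sin (thh l))))).
 apply (Rmult_lt_reg_l ((2 / PI) ^ k)); auto. lra. Qed.

Definition lprod (F : nat -> R) (l : list nat) := fold_right (fun x acc => F x * acc) 1 l.
Lemma lprod_app F l1 l2 : lprod F (l1 ++ l2) = lprod F l1 * lprod F l2.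
Proof. induction l1; simpl. ring. rewrite IHl1. ring. Qed.
Lemma rprod_lprod F n : rprod n F = lprod F (seq 0 n).
Proof. induction n. auto. rewrite seq_S, lprod_app. simpl. rewrite IHn. ring. Qed.
Lemma lprod_map F g l : lprod (fun i => F (g i)) l = lprod F (map g l).
Proof. induction l; simpl; auto. rewrite IHl; auto. Qed.
Lemma lprod_perm F l1 l2 : Permutation l1 l2 -> lprod F l1 = lprod F l2.
Proof. induction 1; simpl; auto. rewrite IHPermutation; auto. ring. congruence. Qed.

Lemma rprod_perm k (sigma : nat -> nat) F :
  (forall j, (j < k)%nat -> (sigma j < k)%nat) ->
  (forall i j, (i < k)%nat -> (j < k)%nat -> sigma i = sigma j -> i = j) ->
  rprod k (fun i => F (sigma i)) = rprod k F.
Proof. intros H1 H2. rewrite !rprod_lprod, lprod_map. apply lprod_perm.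
 apply Permutation_map_same_l.
 - apply FinFun.Injective_map_NoDup_in. intros x y Hx Hy. apply in_seq in Hx, Hy. apply H2; lia. apply seq_NoDup.
 - intros y Hy. apply in_map_iff in Hy. destruct Hy as [x [<- Hx]]. apply in_seq in Hx. apply in_seq. specialize (H1 x). lia. Qed.

Lemma rprod_split_scal j k c g : (j < k)%nat ->
  rprod k (fun i => if Nat.eqb i j then 1 else c * g i) = c ^ (k - 1) * rprod k (fun i => if Nat.eqb i j then 1 else g i).
Proof. intros H. rewrite !rprod_split by auto. rewrite !rprod_scal.
 assert (E : c ^ (k - 1) = c ^ j * c ^ (k - 1 - j)) by (rewrite <- pow_add; f_equal; lia).
 rewrite E. ring. Qed.

Lemma absINR_ge1 i j : i <> j -> 1 <= Rabs (INR j - INR i).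
Proof. intros H. destruct (Nat.lt_total i j) as [h|[h|h]]; [|lia|].
 - assert (INR (S i) <= INR j) by (apply le_INR; lia). rewrite S_INR in H0.
   rewrite Rabs_right; lra.
 - assert (INR (S j) <= INR i) by (apply le_INR; lia). rewrite S_INR in H0. rewrite Rabs_left; lra. Qed.

Lemma pow_Rpower_inv (A : R) (k : nat) : 0 < A -> (0 < k)%nat -> Rpower A (/ INR k) ^ k = A.
Proof. intros HA Hk. rewrite <- Rpower_pow by (unfold Rpower; apply exp_pos).
 rewrite Rpower_mult. rewrite Rinv_l. apply Rpower_1; auto. apply not_0_INR; lia. Qed.

Lemma abs_tri3 a b c : Rabs (a - c) <= Rabs (a - b) + Rabs (b - c).
Proof. replace (a - c) with ((a - b) + (b - c)) by ring. apply Rabs_triang. Qed.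

Theorem corollary3p2 (k : nat) (th thh : nat -> R) (eps tmin : R) :
  (2 <= k)%nat ->
  (forall j, (j < k)%nat -> - (PI / 2) <= th j <= PI / 2) ->
  (forall j, (S j < k)%nat -> th j < th (S j)) ->
  (forall j, (j < k)%nat -> - (PI / 2) <= thh j <= PI / 2) ->
  0 < eps ->
  eta_unit_norm k k th thh < (2 / PI) ^ k * eps ->
  is_theta_min k th tmin ->
  tmin >= Rpower (4 * eps / lambda k) (/ INR k) ->
  exists sigma : nat -> nat,
    (forall j, (j < k)%nat -> (sigma j < k)%nat) /\
    (forall i j, (i < k)%nat -> (j < k)%nat -> sigma i = sigma j -> i = j) /\
    (forall j, (j < k)%nat ->
       Rabs (thh (sigma j) - th j) < tmin / 2 /\
       Rabs (thh (sigma j) - th j)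
         <= 2 ^ (k - 1) * eps / (INR (fact (k - 2)) * tmin ^ (k - 1))).
Proof.
 intros Hk Hth Hinc Hthh Heps Heta [Hmin1 _] Htmin.
 destruct (lambda_bound k Hk) as [Hlam Hlam2].
 assert (HA : 0 < 4 * eps / lambda k) by (apply Rdiv_lt_0_compat; lra).
 assert (Hd : 0 < tmin).
 { assert (0 < Rpower (4 * eps / lambda k) (/ INR k)) by (unfold Rpower; apply exp_pos). lra. }
 assert (Heps2 : eps <= lambda k * tmin ^ k / 4).
 { assert (4 * eps / lambda k <= tmin ^ k).
   { rewrite <- (pow_Rpower_inv (4 * eps / lambda k) k) by (auto; lia). apply pow_incr. split.
     left; unfold Rpower; apply exp_pos. lra. }
   apply (Rmult_le_compat_l (lambda k / 4)) in H; [|lra].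
   replace (lambda k / 4 * (4 * eps / lambda k)) with eps in H by (field; lra). lra. }
 assert (Hgap : forall n i, (i + n < k)%nat -> INR n * tmin <= th (i + n)%nat - th i).
 { induction n; intros i Hi. rewrite Nat.add_0_r. simpl. lra.
   assert (INR n * tmin <= th (i + n)%nat - th i) by (apply IHn; lia).
   assert (tmin <= Rabs (th (S (i + n)) - th (i + n)%nat)) by (apply Hmin1; lia).
   assert (th (i + n)%nat < th (S (i + n))) by (apply Hinc; lia).
   rewrite Rabs_right in H0 by lra. replace (i + S n)%nat with (S (i + n)) by lia. rewrite S_INR. lra. }
 assert (Hsep : forall i m, (i < k)%nat -> (m < k)%nat -> Rabs (INR i - INR m) * tmin <= Rabs (th i - th m)).
 { intros i m Hi Hm. destruct (le_lt_dec i m).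
   - pose proof (Hgap (m - i)%nat i ltac:(lia)). replace (i + (m - i))%nat with m in H by lia.
     rewrite minus_INR in H by lia. assert (INR i <= INR m) by (apply le_INR; lia).
     assert (0 <= (INR m - INR i) * tmin) by (apply Rmult_le_pos; lra).
     rewrite Rabs_left1 by lra. rewrite Rabs_left1 by lra. lra.
   - pose proof (Hgap (i - m)%nat m ltac:(lia)). replace (m + (i - m))%nat with i in H by lia.
     rewrite minus_INR in H by lia. assert (INR m <= INR i) by (apply le_INR; lia).
     assert (0 <= (INR i - INR m) * tmin) by (apply Rmult_le_pos; lra).
     rewrite Rabs_right by lra. rewrite Rabs_right by lra. lra. }
 assert (Hne : forall i j, (i < k)%nat -> (j < k)%nat -> i <> j -> tmin <= Rabs (th i - th j)) by (intros; apply Hmin1; auto).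
 assert (HDn : forall i, (i < k)%nat -> INR (fact i) * INR (fact (k - 1 - i)) * tmin ^ (k - 1) <= Rabs (Dn th k i)).
 { intros i Hi. unfold Dn. rewrite rprod_abs.
   apply Rle_trans with (rprod k (fun m => if Nat.eqb m i then 1 else tmin * Rabs (INR i - INR m))).
   - rewrite rprod_split_scal by auto. rewrite rprod_absdist by auto. right; ring.
   - apply rprod_le. intros m Hm. destruct (Nat.eqb_spec m i). rewrite Rabs_R1. lra.
     split. apply Rmult_le_pos; [lra|apply Rabs_pos]. rewrite Rmult_comm. apply Hsep; auto. }
 assert (Hsum : forall xs, (forall i, (i < k)%nat -> tmin / 2 <= Rabs (th i - xs)) ->
     rsum k (fun i => / (Rabs (Dn th k i) * Rabs (th i - xs))) <= 2 ^ k / (tmin ^ k * INR (fact (k - 1)))).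
 { intros xs Hxs.
   apply Rle_trans with (rsum k (fun i => (2 / tmin ^ k) * / (INR (fact i) * INR (fact (k - 1 - i))))).
   - apply rsum_le. intros i Hi. pose proof (HDn i Hi). pose proof (Hxs i Hi).
     assert (0 < INR (fact i) * INR (fact (k - 1 - i))) by (apply Rmult_lt_0_compat; apply lt_0_INR, lt_O_fact).
     assert (0 < tmin ^ (k - 1)) by (apply pow_lt; lra).
     replace (2 / tmin ^ k * / (INR (fact i) * INR (fact (k - 1 - i)))) with
       (/ ((INR (fact i) * INR (fact (k - 1 - i)) * tmin ^ (k - 1)) * (tmin / 2))).
     2:{ assert (Ek : tmin ^ k = tmin * tmin ^ (k - 1)) by (rewrite tech_pow_Rmult; f_equal; lia).
         rewrite Ek. field. repeat split; try lra; apply INR_fact_neq_0. }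
     apply Rinv_le_contravar. apply Rmult_lt_0_compat. apply Rmult_lt_0_compat; auto. lra.
     apply Rmult_le_compat; auto. left; apply Rmult_lt_0_compat; auto. lra.
   - rewrite rsum_scal.
     assert (Bs : rsum k (fun i => / (INR (fact i) * INR (fact (k - 1 - i)))) = 2 ^ (k - 1) / INR (fact (k - 1))).
     { pose proof (binom_sum (k - 1)) as B. replace (S (k - 1)) with k in B by lia. exact B. }
     assert (E2 : 2 ^ k = 2 * 2 ^ (k - 1)) by (rewrite tech_pow_Rmult; f_equal; lia).
     rewrite Bs, E2. right. field. split; [apply INR_fact_neq_0| apply pow_nonzero; lra]. }
 assert (HP : forall j, (j < k)%nat -> rprod k (fun l => Rabs (th j - thh l)) < eps).
 { intros j Hj. apply P_bound; auto. }
 assert (Hpos : forall xs, (forall i, (i < k)%nat -> tmin / 2 <= Rabs (th i - xs)) ->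
     0 < pp k thh xs / rprod k (fun m => xs - th m)).
 { intros xs Hxs. rewrite key_identity.
   3:{ intros i Hi E. specialize (Hxs i Hi). rewrite E, Rminus_diag, Rabs_R0 in Hxs. lra. }
   2:{ intros i j Hi Hj Hij E. specialize (Hne i j Hi Hj Hij). rewrite E, Rminus_diag, Rabs_R0 in Hne. lra. }
   set (T := rsum k _).
   assert (Rabs T < 1).
   { eapply Rle_lt_trans. apply rsum_abs.
     apply Rlt_le_trans with (rsum k (fun i => eps * / (Rabs (Dn th k i) * Rabs (th i - xs)))).
     - apply rsum_lt. lia. intros i Hi. unfold Rdiv. rewrite Rabs_mult, Rabs_inv, Rabs_mult.
       apply Rmult_lt_compat_r. apply Rinv_0_lt_compat. apply Rmult_lt_0_compat.
       + pose proof (HDn i Hi). assert (0 < INR (fact i) * INR (fact (k - 1 - i)) * tmin ^ (k - 1)).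
         { apply Rmult_lt_0_compat. apply Rmult_lt_0_compat; apply lt_0_INR, lt_O_fact. apply pow_lt; lra. } lra.
       + pose proof (Hxs i Hi). lra.
       + unfold pp. rewrite rprod_abs. apply HP; auto.
     - rewrite rsum_scal. specialize (Hsum xs Hxs).
       apply Rle_trans with (eps * (2 ^ k / (tmin ^ k * INR (fact (k - 1))))).
       apply Rmult_le_compat_l; lra.
       assert (0 < tmin ^ k) by (apply pow_lt; lra). assert (0 < INR (fact (k - 1))) by (apply lt_0_INR, lt_O_fact).
       assert (E2 : 2 ^ k = 4 * 2 ^ (k - 2)) by (replace (4 * 2 ^ (k - 2)) with (2 ^ 2 * 2 ^ (k - 2)) by ring; rewrite <- pow_add; f_equal; lia).
       rewrite E2. apply (Rmult_le_compat_r (4 * 2 ^ (k - 2) / (tmin ^ k * INR (fact (k - 1))))) in Heps2.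
       2:{ apply Rle_mult_inv_pos. pose proof (pow_lt 2 (k - 2)). lra. apply Rmult_lt_0_compat; auto. }
       unfold Rdiv in *. replace (eps * (4 * 2 ^ (k - 2) * / (tmin ^ k * INR (fact (k - 1))))) with (eps * (4 * 2 ^ (k - 2) * / (tmin ^ k * INR (fact (k - 1))))) by ring.
       eapply Rle_trans. apply Heps2.
       replace (lambda k * tmin ^ k * / 4 * (4 * 2 ^ (k - 2) * / (tmin ^ k * INR (fact (k - 1)))))
         with (lambda k * 2 ^ (k - 2) * / INR (fact (k - 1))) by (field; lra).
       apply (Rmult_le_reg_r (INR (fact (k - 1)))); auto. rewrite Rmult_1_l, Rmult_assoc, Rinv_l by lra. lra. }
   pose proof (Rle_abs T). lra. }
 assert (Hexists : forall j, (j < k)%nat -> exists l, (l < k)%nat /\ Rabs (thh l - th j) < tmin / 2).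
 { intros j Hj. set (xm := th j - tmin / 2). set (xp := th j + tmin / 2).
   assert (Hfar : forall xs, Rabs (xs - th j) = tmin / 2 -> forall i, (i < k)%nat -> tmin / 2 <= Rabs (th i - xs)).
   { intros xs Hx i Hi. destruct (Nat.eq_dec i j). subst. rewrite Rabs_minus_sym. lra.
     pose proof (Hne i j Hi Hj n). pose proof (abs_tri3 (th i) xs (th j)). lra. }
   assert (Hm : 0 < pp k thh xm / rprod k (fun m => xm - th m)).
   { apply Hpos. apply Hfar. unfold xm. replace (th j - tmin / 2 - th j) with (- (tmin / 2)) by ring. rewrite Rabs_Ropp, Rabs_right; lra. }
   assert (Hp : 0 < pp k thh xp / rprod k (fun m => xp - th m)).
   { apply Hpos. apply Hfar. unfold xp. replace (th j + tmin / 2 - th j) with (tmin / 2) by ring. rewrite Rabs_right; lra. }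
   assert (HQ : rprod k (fun m => xm - th m) * rprod k (fun m => xp - th m) < 0).
   { rewrite <- rprod_mult. apply (rprod_neg1 _ _ j Hj).
     - unfold xm, xp. nra.
     - intros i Hi Hij. pose proof (Hne i j Hi Hj Hij). unfold xm, xp.
       replace ((th j - tmin / 2 - th i) * (th j + tmin / 2 - th i)) with ((th i - th j) * (th i - th j) - tmin * tmin / 4) by field.
       assert (tmin * tmin <= (th i - th j) * (th i - th j)).
       { destruct (Rcase_abs (th i - th j)) as [h|h]; [rewrite Rabs_left in H by lra|rewrite Rabs_right in H by lra]; nra. }
       nra. }
   assert (HQm : rprod k (fun m => xm - th m) <> 0). { intro E. rewrite E in HQ. lra. }
   assert (HQp : rprod k (fun m => xp - th m) <> 0). { intro E. rewrite E in HQ. lra. }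
   assert (HPP : pp k thh xm * pp k thh xp < 0).
   { set (A := pp k thh xm) in *. set (B := pp k thh xp) in *. set (Qm := rprod k (fun m => xm - th m)) in *. set (Qp := rprod k (fun m => xp - th m)) in *.
     replace (A * B) with ((A / Qm) * (B / Qp) * (Qm * Qp)) by (field; auto).
     assert (0 < (A / Qm) * (B / Qp)) by (apply Rmult_lt_0_compat; auto).
     nra. }
   unfold pp in HPP. rewrite <- rprod_mult in HPP. destruct (rprod_neg_ex _ _ HPP) as [l [Hl Hneg]].
   exists l. split; auto. unfold xm, xp in Hneg.
   destruct (Rcase_abs (thh l - th j)) as [h|h]; [rewrite Rabs_left by lra|rewrite Rabs_right by lra]; nra. }
 assert (Hex : forall j, exists l, (j < k)%nat -> (l < k)%nat /\ Rabs (thh l - th j) < tmin / 2).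
 { intros j. destruct (lt_dec j k) as [h|h]. destruct (Hexists j h) as [l Hl]. exists l; auto.
   exists 0%nat. intro; lia. }
 set (sigma := fun j => proj1_sig (constructive_indefinite_description _ (Hex j))).
 assert (Hs : forall j, (j < k)%nat -> (sigma j < k)%nat /\ Rabs (thh (sigma j) - th j) < tmin / 2).
 { intros j Hj. unfold sigma. destruct (constructive_indefinite_description _ (Hex j)) as [l Hl]. simpl. auto. }
 assert (Hinj : forall i j, (i < k)%nat -> (j < k)%nat -> sigma i = sigma j -> i = j).
 { intros i j Hi Hj E. destruct (Nat.eq_dec i j); auto. exfalso.
   pose proof (Hne i j Hi Hj n). destruct (Hs i Hi) as [_ H1]. destruct (Hs j Hj) as [_ H2]. rewrite E in H1.
   pose proof (abs_tri3 (th i) (thh (sigma j)) (th j)). rewrite Rabs_minus_sym in H1. lra. }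
 exists sigma. split; [|split].
 - intros j Hj. apply Hs; auto.
 - exact Hinj.
 - intros j Hj. split. apply Hs; auto.
   pose proof (HP j Hj) as HPj.
   rewrite <- (rprod_perm k sigma (fun l => Rabs (th j - thh l))) in HPj by (auto; intros; apply Hs; auto).
   rewrite (rprod_pick j k) in HPj by auto. cbv beta in HPj.
   assert (HR : (tmin / 2) ^ (k - 1) * INR (fact (k - 2)) <= rprod k (fun i => if Nat.eqb i j then 1 else Rabs (th j - thh (sigma i)))).
   { apply Rle_trans with (rprod k (fun i => if Nat.eqb i j then 1 else (tmin / 2) * (2 * Rabs (INR j - INR i) - 1))).
     - rewrite rprod_split_scal by auto. rewrite rprod_odddist by auto.
       apply Rmult_le_compat_l. left; apply pow_lt; lra. apply Odd_bound. lia.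
     - apply rprod_le. intros i Hi. destruct (Nat.eqb_spec i j). lra.
       pose proof (absINR_ge1 i j n). split. apply Rmult_le_pos; lra.
       pose proof (Hsep j i Hj Hi). destruct (Hs i Hi) as [_ H2].
       pose proof (abs_tri3 (th j) (thh (sigma i)) (th i)). lra. }
   set (dl := Rabs (thh (sigma j) - th j)).
   assert (Hdl : dl * ((tmin / 2) ^ (k - 1) * INR (fact (k - 2))) < eps).
   { unfold dl. rewrite Rabs_minus_sym. eapply Rle_lt_trans; [|apply HPj]. apply Rmult_le_compat_l. apply Rabs_pos. auto. }
   assert (0 < tmin ^ (k - 1)) by (apply pow_lt; lra).
   assert (0 < INR (fact (k - 2))) by (apply lt_0_INR, lt_O_fact).
   assert (E : (tmin / 2) ^ (k - 1) = tmin ^ (k - 1) / 2 ^ (k - 1)).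
   { unfold Rdiv. rewrite Rpow_mult_distr, pow_inv. auto. }
   rewrite E in Hdl. assert (0 < 2 ^ (k - 1)) by (apply pow_lt; lra).
   apply (Rmult_le_reg_r (INR (fact (k - 2)) * tmin ^ (k - 1))). apply Rmult_lt_0_compat; auto.
   replace (2 ^ (k - 1) * eps / (INR (fact (k - 2)) * tmin ^ (k - 1)) * (INR (fact (k - 2)) * tmin ^ (k - 1))) with (2 ^ (k - 1) * eps) by (field; lra).
   replace (dl * (tmin ^ (k - 1) / 2 ^ (k - 1) * INR (fact (k - 2)))) with (dl * (INR (fact (k - 2)) * tmin ^ (k - 1)) / 2 ^ (k - 1)) in Hdl by (field; lra).
   apply (Rmult_lt_compat_r (2 ^ (k - 1))) in Hdl; auto. unfold Rdiv in Hdl. rewrite Rmult_assoc, Rinv_l in Hdl by lra. lra.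
Qed.
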